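(* Let $(X_m)_{m\in\mathbb Z}$ be a homogeneous second order recurrence sequence with constant coefficients. For integers $a,b,c,d,e$ put $$\Delta=X_{d-a}X_{e-b}-X_{e-a}X_{d-b},\quad \Delta_1=X_{d-c}X_{e-b}-X_{e-c}X_{d-b},\quad \Delta_2=X_{d-a}X_{e-c}-X_{e-a}X_{d-c}.$$ Let $k,m$ be integers. Provided every denominator appearing below is nonzero and, when $k<0$, the base of every power $(\cdot)^r$ or $(\cdot)^k$ appearing is nonzero, the following hold: $$\sum_{r=0}^k\left(\frac{\Delta}{\Delta_1}\right)^rX_{m-k(a-c)-b+c+(a-c)r}=\frac{\Delta}{\Delta_2}\left(\frac{\Delta}{\Delta_1}\right)^kX_m-\frac{\Delta_1}{\Delta_2}X_{m-(k+1)(a-c)},$$ $$\sum_{r=0}^k\left(\frac{\Delta}{\Delta_2}\right)^rX_{m-k(b-c)-a+c+(b-c)r}=\frac{\Delta}{\Delta_1}\left(\frac{\Delta}{\Delta_2}\right)^kX_m-\frac{\Delta_2}{\Delta_1}X_{m-(k+1)(b-c)},$$ $$\sum_{r=0}^k\left(\frac{-\Delta_2}{\Delta_1}\right)^rX_{m-k(a-b)+b-c+(a-b)r}=\frac{\Delta_2}{\Delta}\left(\frac{-\Delta_2}{\Delta_1}\right)^kX_m+\frac{\Delta_1}{\Delta}X_{m-(k+1)(a-b)}.$$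
   Context: A homogeneous second order recurrence sequence with constant coefficients is a sequence $(X_m)_{m\in\mathbb Z}$ of complex numbers for which there are constants $p,q\in\mathbb C$, $q\neq 0$, with $X_m=pX_{m-1}+qX_{m-2}$ for all $m\in\mathbb Z$. Summation convention: for an integer $k<0$, $\sum_{r=0}^k f_r$ means $-\sum_{r=k+1}^{-1} f_r$ (in particular it equals $0$ when $k=-1$). *)

(* Defs.v *)
(* The ambient field of the paper is C; we state the result
   for an arbitrary field F (a generalization; C is such a field). *)
From HB Require Import structures.
From mathcomp Require Import all_boot all_order all_algebra.
Set Implicit Arguments. Unset Strict Implicit. Unset Printing Implicit Defensive.
Import Order.TTheory GRing.Theory Num.Theory.
Local Open Scope ring_scope.

Definition is_rec2 (F : fieldType) (X : int -> F) (p q : F) : Prop :=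
  q != 0 /\ forall m : int, X m = p * X (m - 1) + q * X (m - 2).

(* Summation convention: for k >= 0, sum_{r=0}^k f r;
   for k < 0, - sum_{r=k+1}^{-1} f r  (so k = -1 gives 0). *)
Definition sumZ (F : fieldType) (k : int) (f : int -> F) : F :=
  match k with
  | Posz n => \sum_(i < n.+1) f (Posz i)
  | Negz n => (* k = -(n+1); r ranges over -n, ..., -1 *)
      - \sum_(i < n) f (- (Posz i.+1))
  end.

Definition Delta (F : fieldType) (X : int -> F) (a b d e : int) : F :=
  X (d - a) * X (e - b) - X (e - a) * X (d - b).
Definition Delta1 (F : fieldType) (X : int -> F) (a b c d e : int) : F :=
  X (d - c) * X (e - b) - X (e - c) * X (d - b).
Definition Delta2 (F : fieldType) (X : int -> F) (a b c d e : int) : F :=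
  X (d - a) * X (e - c) - X (e - a) * X (d - c).

(* Main.v *)
Require Import Defs.
From HB Require Import structures.
From mathcomp Require Import all_boot all_order all_algebra.
From mathcomp Require Import ring zify.
Import Order.TTheory GRing.Theory Num.Theory.
Local Open Scope ring_scope.

Section H.
Variable F : fieldType.

Lemma rec_zero (p q : F) (Y : int -> F) : q != 0 ->
  (forall m, Y m = p * Y (m - 1) + q * Y (m - 2)) ->
  forall j, Y j = 0 -> Y (j + 1) = 0 -> forall n, Y n = 0.
Proof.
move=> qnz R j h0 h1.
have up : forall k : nat, Y (j + k%:Z) = 0 /\ Y (j + k%:Z + 1) = 0.
  elim=> [|k [IH1 IH2]]; first by rewrite addr0.
  split; first by have -> : j + k.+1%:Z = j + k%:Z + 1 by lia.
  rewrite R.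
  have -> : j + k.+1%:Z + 1 - 1 = j + k%:Z + 1 by lia.
  have -> : j + k.+1%:Z + 1 - 2 = j + k%:Z by lia.
  by rewrite IH1 IH2 !mulr0 addr0.
have down : forall k : nat, Y (j - k%:Z) = 0 /\ Y (j - k%:Z + 1) = 0.
  elim=> [|k [IH1 IH2]]; first by rewrite subr0.
  split; last by have -> : j - k.+1%:Z + 1 = j - k%:Z by lia.
  have := R (j - k%:Z + 1).
  have -> : j - k%:Z + 1 - 1 = j - k%:Z by lia.
  have -> : j - k%:Z + 1 - 2 = j - k.+1%:Z by lia.
  rewrite IH1 IH2 mulr0 add0r => /esym/eqP.
  by rewrite mulf_eq0 (negbTE qnz) => /eqP.
move=> n; case: (lerP j n) => hjn.
  have [k hk] : exists k : nat, n = j + k%:Z.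
    exists `|n - j|%N; rewrite gez0_abs ?subr_ge0 //; ring.
  by rewrite hk; case: (up k).
have [k hk] : exists k : nat, n = j - k%:Z.
  exists `|j - n|%N; rewrite gez0_abs ?subr_ge0 ?ltW //; ring.
by rewrite hk; case: (down k).
Qed.

Definition G (X : int -> F) (a b c : int) (n d e : int) : F :=
  (X (d - a) * X (e - b) - X (e - a) * X (d - b)) * X (n - c)
  - (X (d - c) * X (e - b) - X (e - c) * X (d - b)) * X (n - a)
  - (X (d - a) * X (e - c) - X (e - a) * X (d - c)) * X (n - b).

Lemma ident (X : int -> F) (p q : F) (a b c d e : int) :
  is_rec2 X p q -> forall n,
  Delta X a b d e * X (n - c) =
  Delta1 X a b c d e * X (n - a) + Delta2 X a b c d e * X (n - b).
Proof.
move=> [qnz R] n.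
have Rs : forall t s, X (t - s) = p * X (t - 1 - s) + q * X (t - 2 - s).
  move=> t s; rewrite R; congr (_ * X _ + _ * X _); ring.
have Gn : forall d e, (fun t => G X a b c t d e) =1 (fun t => p * G X a b c (t - 1) d e + q * G X a b c (t - 2) d e).
  by move=> d' e' t; rewrite /G (Rs t a) (Rs t b) (Rs t c); ring.
have Ge : forall n d, (fun t => G X a b c n d t) =1 (fun t => p * G X a b c n d (t - 1) + q * G X a b c n d (t - 2)).
  by move=> n' d' t; rewrite /G (Rs t a) (Rs t b) (Rs t c); ring.
have Gd : forall n e, (fun t => G X a b c n t e) =1 (fun t => p * G X a b c n (t - 1) e + q * G X a b c n (t - 2) e).
  by move=> n' e' t; rewrite /G (Rs t a) (Rs t b) (Rs t c); ring.
have G1 : forall n e, G X a b c n (n + 1) e = 0.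
  move=> n' e'; apply: (@rec_zero p q (fun t => G X a b c n' (n' + 1) t) qnz (Ge n' (n' + 1)) n' _ _ e').
    by rewrite /= /G; ring.
  by rewrite /= /G; ring.
have G2 : G X a b c n d e = 0.
  apply: (@rec_zero p q (fun t => G X a b c n t e) qnz (Gd n e) n _ _ d); last exact: G1.
  by rewrite /= /G; ring.
move: G2; rewrite /G /Delta /Delta1 /Delta2 => H.
apply/eqP; rewrite -subr_eq0; apply/eqP; rewrite -H; ring.
Qed.

Lemma tele_main (A B rho : F) (Y : int -> F) (k : int) (f : int -> F) :
  B * rho = A -> (k < 0 -> rho != 0) ->
  (forall r, f r = rho ^ r * (A * Y (k - r) - B * Y (k - r + 1))) ->
  sumZ k f = A * rho ^ k * Y 0 - B * Y (k + 1).
Proof.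
move=> hB hnz hf; case: k hnz hf => [n|n] hnz hf /=.
  under eq_bigr => i _ do rewrite hf.
  have gen : forall (n : nat) (K : int),
    \sum_(i < n.+1) rho ^+ i * (A * Y (K - i%:Z) - B * Y (K - i%:Z + 1))
    = A * rho ^+ n * Y (K - n%:Z) - B * Y (K + 1).
    elim=> [|n' IH] K.
      by rewrite big_ord_recr big_ord0 /= add0r subr0 expr0; ring.
    rewrite big_ord_recr /= IH.
    have -> : K - (n'.+1)%:Z + 1 = K - n'%:Z by lia.
    rewrite exprS -hB; ring.
  rewrite (gen n (Posz n)) subrr; done.
have rnz : rho != 0 by apply: hnz.
set h := fun r : int => A * rho ^ r * Y (Negz n - r).
have ht : forall r, f r = h r - h (r - 1).
  move=> r; rewrite hf /h.
  have -> : Negz n - (r - 1) = Negz n - r + 1 by ring.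
  have -> : rho ^ r = rho ^ (r - 1) * rho.
    by rewrite -[in RHS](expr1z rho) -expfzDr // subrK.
  rewrite -hB; ring.
under eq_bigr => i _ do rewrite ht.
have gen : forall n : nat,
  \sum_(i < n) (h (- (i.+1)%:Z) - h (- (i.+1)%:Z - 1)) = h (-1) - h (- (n.+1)%:Z).
  elim=> [|n' IH]; first by rewrite big_ord0 subrr.
  rewrite big_ord_recr /= IH.
  have -> : - (n'.+1)%:Z - 1 = - (n'.+2)%:Z by lia.
  ring.
rewrite gen /h NegzE subrr.
have -> : - (n.+1)%:Z - -1 = - (n.+1)%:Z + 1 by ring.
rewrite exprN1 -hB; field.
done.
Qed.

Lemma solve_z (D D1 D2 x y z : F) : D2 != 0 -> D * x = D1 * y + D2 * z ->
  z = D / D2 * x - D1 / D2 * y.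
Proof.
move=> nz H; have H' : D2 * z = D * x - D1 * y by rewrite H; ring.
by rewrite -[z](mulKf nz) H'; field.
Qed.

Lemma solve_y (D D1 D2 x y z : F) : D1 != 0 -> D * x = D1 * y + D2 * z ->
  y = D / D1 * x - D2 / D1 * z.
Proof.
move=> nz H; have H' : D1 * y = D * x - D2 * z by rewrite H; ring.
by rewrite -[y](mulKf nz) H'; field.
Qed.

Lemma solve_x (D D1 D2 x y z : F) : D != 0 -> D * x = D1 * y + D2 * z ->
  x = D1 / D * y + D2 / D * z.
Proof.
move=> nz H.
by rewrite -[x](mulKf nz) H; field.
Qed.

End H.

Theorem lemma5 (F : fieldType) (X : int -> F) (p q : F) (a b c d e k m : int) :
  is_rec2 X p q ->
  let D := Delta X a b d e in
  let D1 := Delta1 X a b c d e in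
  let D2 := Delta2 X a b c d e in
  [/\ (D1 != 0 -> D2 != 0 -> (k < 0 -> D / D1 != 0) ->
        sumZ k (fun r => (D / D1) ^ r * X (m - k * (a - c) - b + c + (a - c) * r))
        = D / D2 * (D / D1) ^ k * X m - D1 / D2 * X (m - (k + 1) * (a - c))),
      (D1 != 0 -> D2 != 0 -> (k < 0 -> D / D2 != 0) ->
        sumZ k (fun r => (D / D2) ^ r * X (m - k * (b - c) - a + c + (b - c) * r))
        = D / D1 * (D / D2) ^ k * X m - D2 / D1 * X (m - (k + 1) * (b - c)))
    & (D1 != 0 -> D != 0 -> (k < 0 -> - D2 / D1 != 0) ->
        sumZ k (fun r => (- D2 / D1) ^ r * X (m - k * (a - b) + b - c + (a - b) * r))
        = D2 / D * (- D2 / D1) ^ k * X m + D1 / D * X (m - (k + 1) * (a - b)))].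
Proof.
move=> hrec D D1 D2.
have I := @ident F X p q a b c d e hrec.
rewrite -/D -/D1 -/D2 in I; clearbody D D1 D2.
split.
- move=> h1 h2 hk.
  rewrite (@tele_main F (D / D2) (D1 / D2) (D / D1) (fun j => X (m - j * (a - c))) k) //=.
  + by rewrite mul0r subr0.
  + by field; rewrite h1 h2.
  move=> r; congr (_ * _).
  have := I (m - k * (a - c) + c + (a - c) * r).
  have -> : m - k * (a - c) + c + (a - c) * r - c = m - (k - r) * (a - c) by ring.
  have -> : m - k * (a - c) + c + (a - c) * r - a = m - (k - r + 1) * (a - c) by ring.
  have -> : m - k * (a - c) + c + (a - c) * r - b = m - k * (a - c) - b + c + (a - c) * r by ring.
  exact: solve_z.
- move=> h1 h2 hk.
  rewrite (@tele_main F (D / D1) (D2 / D1) (D / D2) (fun j => X (m - j * (b - c))) k) //=.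
  + by rewrite mul0r subr0.
  + by field; rewrite ?h0 ?h1 ?h2.
  move=> r; congr (_ * _).
  have := I (m - k * (b - c) + c + (b - c) * r).
  have -> : m - k * (b - c) + c + (b - c) * r - c = m - (k - r) * (b - c) by ring.
  have -> : m - k * (b - c) + c + (b - c) * r - b = m - (k - r + 1) * (b - c) by ring.
  have -> : m - k * (b - c) + c + (b - c) * r - a = m - k * (b - c) - a + c + (b - c) * r by ring.
  exact: solve_y.
- move=> h1 h0 hk.
  rewrite (@tele_main F (D2 / D) (- (D1 / D)) (- D2 / D1) (fun j => X (m - j * (a - b))) k) //=.
  + by rewrite mul0r subr0; ring.
  + by field; rewrite ?h0 ?h1 ?h2.
  move=> r; congr (_ * _).
  have := I (m - k * (a - b) + b + (a - b) * r).
  have -> : m - k * (a - b) + b + (a - b) * r - b = m - (k - r) * (a - b) by ring.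
  have -> : m - k * (a - b) + b + (a - b) * r - a = m - (k - r + 1) * (a - b) by ring.
  have -> : m - k * (a - b) + b + (a - b) * r - c = m - k * (a - b) + b - c + (a - b) * r by ring.
  move=> H; rewrite (@solve_x F _ _ _ _ _ _ h0 H); ring.
Qed.
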